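(* Let $\mathcal H$ be the set of pairs $(g,h)$ of Markov policies $g,h:\mathcal X\to\{0,1\}$ such that $N^{(g)}(x)\ge N^{(h)}(x)$ for all $x\in\mathcal X$. Each of the following conditions is sufficient for the RB to be indexable: (a) for every $(g,h)\in\mathcal H$ and every $x,z\in\mathcal X$, \[\sum_{y\in\mathcal X}\Big\{[\beta P_{zy}(1)-P_{xy}(1)]^+N^{(g)}(y)-[P_{xy}(1)-\beta P_{zy}(1)]^+N^{(h)}(y)\Big\}\le\frac{(1-\beta)^2}{\beta};\] (b) for every $(g,h)\in\mathcal H$ and every $x\in\mathcal X$, \[\sum_{y\in\mathcal X}\Big\{[P_{xy}(0)-P_{xy}(1)]^+N^{(g)}(y)-[P_{xy}(1)-P_{xy}(0)]^+N^{(h)}(y)\Big\}\le\frac{1-\beta}{\beta}.\]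
   Context: A restless bandit (RB) consists of a finite or countable state space $\mathcal X$, actions $\{0,1\}$ (0 = passive, 1 = active), transition matrices $P(0),P(1)$ on $\mathcal X$, and a cost function $c:\mathcal X\times\{0,1\}\to\mathbb R$; $\beta\in(0,1)$ is a discount factor. $[u]^+=\max\{u,0\}$. For $\lambda\in\mathbb R$ let $c_\lambda(x,a)=c(x,a)+\lambda a$. For a Markov policy $g:\mathcal X\to\{0,1\}$ (with $X_{t+1}$ drawn from $P_{X_t\,\cdot}(g(X_t))$) let $N^{(g)}(x)=(1-\beta)\mathbb E[\sum_{t\ge0}\beta^t g(X_t)\mid X_0=x]$. Let $V_\lambda$ be the unique fixed point of $V_\lambda(x)=\min\{H_\lambda(x,0),H_\lambda(x,1)\}$, $H_\lambda(x,a)=(1-\beta)c_\lambda(x,a)+\beta\sum_y P_{xy}(a)V_\lambda(y)$, and $g_\lambda(x)=0$ if $H_\lambda(x,0)<H_\lambda(x,1)$, $g_\lambda(x)=1$ otherwise. The passive set is $\Pi_\lambda=\{x: g_\lambda(x)=0\}$. The RB is indexable if $\lambda'\le\lambda''$ implies $\Pi_{\lambda'}\subseteq\Pi_{\lambda''}$. *)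

(* Defs.v *)
From HB Require Import structures.
From mathcomp Require Import all_boot all_order all_algebra.
From mathcomp Require Import all_classical all_reals all_analysis.
Set Implicit Arguments. Unset Strict Implicit. Unset Printing Implicit Defensive.
Import Order.TTheory GRing.Theory Num.Theory.
Local Open Scope ring_scope.

Section RB.
Variable R : realType.

Definition pos_part (u : R) : R := Num.max u 0.

(* Sum over a countable index type of a real function, defined as
   (sum of positive parts) - (sum of negative parts), each an unordered
   (extended) sum; it is the usual sum for absolutely summable families. *)
Definition ssum (T : choiceType) (f : T -> R) : R :=
  fine (\esum_(y in [set: T]) (pos_part (f y))%:E)
  - fine (\esum_(y in [set: T]) (pos_part (- f y))%:E).

Variable X : countType.

(* transition kernels P(0), P(1): P a x y = P_{xy}(a) *)
Definition stochastic (P : bool -> X -> X -> R) : Prop :=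
  forall a x, (forall y, 0 <= P a x y) /\ ssum (P a x) = 1.

(* t-step transition probabilities of the chain under Markov policy g :
   dist P g t x y = Pr(X_t = y | X_0 = x) *)
Fixpoint dist (P : bool -> X -> X -> R) (g : X -> bool) (t : nat) (x y : X) : R :=
  match t with
  | 0 => if y == x then 1 else 0
  | t'.+1 => ssum (fun z => dist P g t' x z * P (g z) z y)
  end.

Definition Nfreq (P : bool -> X -> X -> R) (beta : R) (g : X -> bool) (x : X) : R :=
  (1 - beta) * ssum (fun t : nat =>
     beta ^+ t * ssum (fun y => dist P g t x y * (g y)%:R)).

Definition Hq (P : bool -> X -> X -> R) (c : X -> bool -> R) (beta lam : R)
    (V : X -> R) (x : X) (a : bool) : R :=
  (1 - beta) * (c x a + lam * (a%:R)) + beta * ssum (fun y => P a x y * V y).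

Definition bellman_fp (P : bool -> X -> X -> R) (c : X -> bool -> R) (beta lam : R)
    (V : X -> R) : Prop :=
  (exists M : R, forall x, `|V x| <= M) /\
  forall x, V x = Num.min (Hq P c beta lam V x false) (Hq P c beta lam V x true).

(* passive set Pi_lambda = {x | g_lambda(x) = 0} = {x | H(x,0) < H(x,1)} *)
Definition passive (P : bool -> X -> X -> R) (c : X -> bool -> R) (beta lam : R)
    (V : X -> R) (x : X) : Prop :=
  Hq P c beta lam V x false < Hq P c beta lam V x true.

Definition indexable (P : bool -> X -> X -> R) (c : X -> bool -> R) (beta : R)
    (V : R -> X -> R) : Prop :=
  forall lam1 lam2 : R, lam1 <= lam2 ->
    forall x, passive P c beta lam1 (V lam1) x -> passive P c beta lam2 (V lam2) x.

Definition inH (P : bool -> X -> X -> R) (beta : R) (g h : X -> bool) : Prop :=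
  forall x, Nfreq P beta h x <= Nfreq P beta g x.

Definition cond_a (P : bool -> X -> X -> R) (beta : R) : Prop :=
  forall g h : X -> bool, inH P beta g h -> forall x z : X,
    ssum (fun y => pos_part (beta * P true z y - P true x y) * Nfreq P beta g y
                   - pos_part (P true x y - beta * P true z y) * Nfreq P beta h y)
    <= (1 - beta) ^+ 2 / beta.

Definition cond_b (P : bool -> X -> X -> R) (beta : R) : Prop :=
  forall g h : X -> bool, inH P beta g h -> forall x : X,
    ssum (fun y => pos_part (P false x y - P true x y) * Nfreq P beta g y
                   - pos_part (P true x y - P false x y) * Nfreq P beta h y)
    <= (1 - beta) / beta.

End RB.

(* Main.v *)
Require Import Defs.
From HB Require Import structures.
From mathcomp Require Import all_boot all_order all_algebra.
From mathcomp Require Import all_classical all_reals all_analysis.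
From mathcomp Require Import lra ring.
Import Order.TTheory GRing.Theory Num.Theory.
Local Open Scope ring_scope.
Set Implicit Arguments. Unset Strict Implicit. Unset Printing Implicit Defensive.

Section Ssum.
Variable R : realType.

Definition Es (T : choiceType) (f : T -> R) : \bar R :=
  (\esum_(y in [set: T]) (f y)%:E)%E.
Definition summ (T : choiceType) (f : T -> R) := (Es (fun y => `|f y|%R) < +oo)%E.

Lemma esumZ (T : choiceType) (c : R) (a : T -> \bar R) : 0 <= c ->
  (forall i, 0 <= a i)%E ->
  (\esum_(i in [set: T]) (c%:E * a i) = c%:E * \esum_(i in [set: T]) a i)%E.
Proof.
move=> c0 a0; rewrite /esum -ereal_supZl //.
  rewrite image_comp. congr ereal_sup. apply: eq_imagel => A _ /=.
  by apply/esym/ge0_mule_fsumr.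
by apply/set0P; exists (\sum_(i \in set0) a i)%E; exists set0.
Qed.

Lemma pos_partE (u : R) : pos_part u = if u < 0 then 0 else u.
Proof. by rewrite /pos_part /Order.max; case: ltgtP. Qed.
Lemma pos_part_ge0 (u : R) : 0 <= pos_part u.
Proof. rewrite pos_partE; case: ltP => //. Qed.
Lemma pos_partB (u : R) : pos_part u - pos_part (- u) = u.
Proof. rewrite !pos_partE; case: ltP => h; case: ltP => h'; lra. Qed.
Lemma pos_part_id (u : R) : 0 <= u -> pos_part u = u.
Proof. rewrite pos_partE; case: ltP => h; lra. Qed.
Lemma pos_part_le (u v : R) : u <= v -> 0 <= v -> pos_part u <= v.
Proof. rewrite pos_partE; case: ltP => h; lra. Qed.
Lemma pos_part_abs (u : R) : pos_part u <= `|u|.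
Proof. by apply: pos_part_le; rewrite ?ler_norm. Qed.
Lemma pos_part0 (u : R) : u <= 0 -> pos_part u = 0.
Proof. rewrite pos_partE; case: ltP => h; lra. Qed.

Variable T : choiceType.
Implicit Types f g : T -> R.

Lemma Es_ge0 f : (forall y, 0 <= f y) -> (0 <= Es f)%E.
Proof. by move=> h; apply: esum_ge0 => y _; rewrite lee_fin. Qed.

Lemma Es_le f g : (forall y, f y <= g y) -> (Es f <= Es g)%E.
Proof. by move=> h; apply: le_esum => y _; rewrite lee_fin. Qed.

Lemma Es0 : Es (fun _ : T => 0) = 0%E.
Proof. by rewrite /Es esum1. Qed.

Lemma EsD f g : (forall y, 0 <= f y) -> (forall y, 0 <= g y) ->
  Es (fun y => f y + g y) = (Es f + Es g)%E.
Proof.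
move=> hf hg; rewrite /Es -esumD; last 2 first.
- by move=> y _; rewrite lee_fin.
- by move=> y _; rewrite lee_fin.
by apply: eq_esum => y _; rewrite EFinD.
Qed.

Lemma EsZ (c : R) f : 0 <= c -> (forall y, 0 <= f y) ->
  Es (fun y => c * f y) = (c%:E * Es f)%E.
Proof.
move=> c0 hf; rewrite /Es -esumZ //.
Qed.

Lemma Es_fin f : (forall y, 0 <= f y) -> (Es f < +oo)%E -> Es f = (fine (Es f))%:E.
Proof. by move=> h1 h2; rewrite fineK // ge0_fin_numE // Es_ge0. Qed.

Lemma Es_point f y : (forall y, 0 <= f y) -> ((f y)%:E <= Es f)%E.
Proof.
move=> h; apply: esum_ge; exists [set y]%classic; first by split => //; exact: finite_set1.
by rewrite fsbig_set1.
Qed.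

Lemma Es_ind (x : T) (r : R) : 0 <= r -> Es (fun y => if y == x then r else 0) = r%:E.
Proof.
move=> r0; rewrite /Es.
rewrite (_ : (fun y => _) = (fun y => if y \in [set x]%classic then r%:E else 0%E)); last first.
  apply/funext => y; rewrite classical_sets.in_set1; by case: eqP.
by rewrite -esum_mkcond esum_set1 // lee_fin.
Qed.

Lemma ssum_nn f : (forall y, 0 <= f y) -> ssum f = fine (Es f).
Proof.
move=> h; rewrite /ssum.
rewrite (_ : (fun y => (pos_part (f y))%:E) = (fun y => (f y)%:E)); last first.
  by apply/funext => y; rewrite pos_part_id.
rewrite (_ : (fun y => (pos_part (- f y))%:E) = (fun y => 0%:E)); last first.
  by apply/funext => y; rewrite pos_part0 // oppr_le0.
by rewrite [X in _ - fine X]esum1 // subr0.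
Qed.

Lemma ssum_ge0 f : (forall y, 0 <= f y) -> 0 <= ssum f.
Proof. by move=> h; rewrite ssum_nn // fine_ge0 // Es_ge0. Qed.

Lemma ssum_decomp f (a b : T -> R) : (forall y, 0 <= a y) -> (forall y, 0 <= b y) ->
  (Es a < +oo)%E -> (Es b < +oo)%E -> (forall y, f y = a y - b y) ->
  ssum f = fine (Es a) - fine (Es b).
Proof.
move=> a0 b0 af bf fab.
have pa : Es (fun y => pos_part (f y)) = (fine (Es (fun y => pos_part (f y))))%:E.
  apply: Es_fin => [y|]; first exact: pos_part_ge0.
  apply: le_lt_trans af; apply: Es_le => y; apply: pos_part_le => //.
  by rewrite fab lerBlDr lerDl.
have pb : Es (fun y => pos_part (- f y)) = (fine (Es (fun y => pos_part (- f y))))%:E.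
  apply: Es_fin => [y|]; first exact: pos_part_ge0.
  apply: le_lt_trans bf; apply: Es_le => y; apply: pos_part_le => //.
  by rewrite fab opprB lerBlDr lerDl.
have E : Es (fun y => pos_part (f y) + b y) = Es (fun y => pos_part (- f y) + a y).
  congr Es; apply/funext => y.
  by have := pos_partB (f y); rewrite fab => h; apply/eqP; rewrite -subr_eq0; apply/eqP; lra.
have h : fine (Es (fun y => pos_part (f y))) + fine (Es b)
    = fine (Es (fun y => pos_part (- f y))) + fine (Es a).
  apply: EFin_inj; rewrite !EFinD -pa -pb -(Es_fin a0 af) -(Es_fin b0 bf) -!EsD ?E //;
    move=> y; exact: pos_part_ge0.
rewrite /ssum; change (fine (Es (fun y => pos_part (f y))) - fine (Es (fun y => pos_part (- f y)))
  = fine (Es a) - fine (Es b)); lra.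
Qed.

Lemma summ_fin f : summ f -> (Es (fun y => pos_part (f y)) < +oo)%E /\
  (Es (fun y => pos_part (- f y)) < +oo)%E.
Proof.
move=> sf; split; apply: le_lt_trans sf; apply: Es_le => y.
  exact: pos_part_abs.
by rewrite -normrN; exact: pos_part_abs.
Qed.

Lemma ssumE f : ssum f = fine (Es (fun y => pos_part (f y))) - fine (Es (fun y => pos_part (- f y))).
Proof. by []. Qed.

Lemma Es_finM (k : R) f : (forall y, 0 <= f y) -> (Es f < +oo)%E -> 0 <= k ->
  (Es (fun y => (k * f y)%R) < +oo)%E.
Proof. by move=> h fin k0; rewrite EsZ // (Es_fin h fin) -EFinM ltry. Qed.

Lemma Es_finD f g : (forall y, 0 <= f y) -> (forall y, 0 <= g y) ->
  (Es f < +oo)%E -> (Es g < +oo)%E -> (Es (fun y => (f y + g y)%R) < +oo)%E.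
Proof. by move=> hf hg ff fg; rewrite EsD // lte_add_pinfty. Qed.

Lemma fineEsD f g : (forall y, 0 <= f y) -> (forall y, 0 <= g y) ->
  (Es f < +oo)%E -> (Es g < +oo)%E ->
  fine (Es (fun y => f y + g y)) = fine (Es f) + fine (Es g).
Proof.
move=> hf hg ff fg; rewrite EsD // fineD // ge0_fin_numE ?Es_ge0 //.
Qed.

Lemma fineEsZ (k : R) f : (forall y, 0 <= f y) -> 0 <= k ->
  fine (Es (fun y => k * f y)) = k * fine (Es f).
Proof.
move=> hf k0; rewrite EsZ //; case: (Es f) => [r| |] //=;
  (have [->|kp] := eqVneq k 0; first by rewrite mul0e mul0r);
  have kk : 0 < k by rewrite lt0r kp k0.
  by rewrite mulry gtr0_sg ?mul1e ?mulr0.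
by rewrite mulrNy gtr0_sg ?mul1e ?mulr0.
Qed.

Lemma summ_le f g (k : R) : 0 <= k -> (forall y, `|f y| <= k * `|g y|) -> summ g -> summ f.
Proof.
move=> k0 h sg; rewrite /summ; apply: le_lt_trans (Es_le h) _.
by apply: Es_finM.
Qed.

Lemma summD f g : summ f -> summ g -> summ (fun y => f y + g y).
Proof.
move=> sf sg; rewrite /summ; apply: le_lt_trans (Es_le (fun y => ler_normD (f y) (g y))) _.
exact: Es_finD.
Qed.

Lemma summN f : summ f -> summ (fun y => - f y).
Proof.
by move=> sf; apply: (summ_le (g := f) (k := 1)) sf => // y; rewrite normrN mul1r.
Qed.

Lemma summZ (c : R) f : summ f -> summ (fun y => c * f y).
Proof. by move=> sf; apply: (summ_le (g := f) (k := `|c|)) sf => // y; rewrite normrM. Qed.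

Lemma summ_nn f : (forall y, 0 <= f y) -> (Es f < +oo)%E -> summ f.
Proof.
move=> h fin; rewrite /summ (_ : (fun y => `|f y|) = f) //.
by apply/funext => y; rewrite ger0_norm.
Qed.

Lemma ssumD f g : summ f -> summ g -> ssum (fun y => f y + g y) = ssum f + ssum g.
Proof.
move=> sf sg; have [pf nf] := summ_fin sf; have [pg ng] := summ_fin sg.
have H0 := pos_part_ge0.
rewrite (ssum_decomp (a := fun y => pos_part (f y) + pos_part (g y))
   (b := fun y => pos_part (- f y) + pos_part (- g y))).
- by rewrite !fineEsD // !ssumE; lra.
- by move=> y; rewrite addr_ge0.
- by move=> y; rewrite addr_ge0.
- exact: Es_finD.
- exact: Es_finD.
- by move=> y; have := pos_partB (f y); have := pos_partB (g y); lra.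
Qed.

Lemma ssumN f : ssum (fun y => - f y) = - ssum f.
Proof.
rewrite /ssum /=.
rewrite (_ : (fun y => (pos_part (- - f y))%:E) = (fun y => (pos_part (f y))%:E)); first lra.
by apply/funext => y; rewrite opprK.
Qed.

Lemma ssumZ (c : R) f : summ f -> ssum (fun y => c * f y) = c * ssum f.
Proof.
move=> sf; have [pf nf] := summ_fin sf; have H0 := pos_part_ge0.
have [c0|c0] := leP 0 c.
  rewrite (ssum_decomp (a := fun y => c * pos_part (f y)) (b := fun y => c * pos_part (- f y))).
  - by rewrite !fineEsZ // ssumE; lra.
  - by move=> y; rewrite mulr_ge0.
  - by move=> y; rewrite mulr_ge0.
  - exact: Es_finM.
  - exact: Es_finM.
  - by move=> y; rewrite -mulrBr pos_partB.
have c0' : 0 <= - c by lra.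
rewrite (ssum_decomp (a := fun y => - c * pos_part (- f y)) (b := fun y => - c * pos_part (f y))).
- by rewrite !fineEsZ // ssumE; lra.
- by move=> y; rewrite mulr_ge0.
- by move=> y; rewrite mulr_ge0.
- exact: Es_finM.
- exact: Es_finM.
- by move=> y; rewrite -mulrBr mulNr -mulrN opprB pos_partB.
Qed.

Lemma ssum_le f g : summ f -> summ g -> (forall y, f y <= g y) -> ssum f <= ssum g.
Proof.
move=> sf sg h.
have : 0 <= ssum (fun y => g y + - f y) by apply: ssum_ge0 => y; have := h y; lra.
rewrite ssumD //; last exact: summN.
rewrite ssumN; lra.
Qed.

Lemma ssum_point f y : (forall y, 0 <= f y) -> summ f -> f y <= ssum f.
Proof.
move=> h sf; rewrite ssum_nn //.
have fin : (Es f < +oo)%E.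
  by move: sf; rewrite /summ (_ : (fun y => `|f y|) = f) //; apply/funext => z; rewrite ger0_norm.
by rewrite -lee_fin -(Es_fin h fin) Es_point.
Qed.

Lemma ssum_ind (x : T) (r : R) : 0 <= r -> ssum (fun y => if y == x then r else 0) = r.
Proof.
move=> r0; rewrite ssum_nn ?Es_ind // => y; by case: eqP.
Qed.

Lemma summ_ind (x : T) (r : R) : summ (fun y => if y == x then r else 0).
Proof.
apply: (summ_le (g := fun y => if y == x then `|r| else 0) (k := 1)) => //.
  by move=> y; case: eqP; rewrite ?normr0 ?normr_id mul1r.
apply: summ_nn => [y|]; first by case: eqP.
by rewrite Es_ind // ltry.
Qed.

Lemma ssum_eq f g : (forall y, f y = g y) -> ssum f = ssum g.
Proof. by move=> h; rewrite (_ : f = g) //; apply/funext. Qed.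

Lemma summ_eq f g : (forall y, f y = g y) -> summ f -> summ g.
Proof. by move=> h; rewrite (_ : f = g) //; apply/funext. Qed.

End Ssum.

Section Swap.
Variable R : realType.

Lemma ereal_point (J : choiceType) (b : J -> \bar R) j : (forall j, 0 <= b j)%E ->
  (b j <= \esum_(j in [set: J]) b j)%E.
Proof.
move=> h; apply: esum_ge; exists [set j]%classic; first by split => //; exact: finite_set1.
by rewrite fsbig_set1.
Qed.

Lemma esum_swap (I J : choiceType) (a : I -> J -> \bar R) : (forall i j, 0 <= a i j)%E ->
  (\esum_(i in [set: I]) \esum_(j in [set: J]) a i j =
   \esum_(j in [set: J]) \esum_(i in [set: I]) a i j)%E.
Proof.
move=> h; rewrite esum_esum //; rewrite [RHS]esum_esum //.
rewrite (@reindex_esum R _ _ ([set: I] `*`` (fun=> [set: J]))%classic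
   ([set: J] `*`` (fun=> [set: I]))%classic (fun k : I * J => (k.2, k.1))) //.
split.
- by move=> k _.
- by move=> [i j] [i' j'] _ _ /= [-> ->].
- by move=> [j i] _; exists (i, j).
Qed.

Lemma summ_Es (T : choiceType) (f : T -> R) : (forall y, 0 <= f y) -> summ f -> (Es f < +oo)%E.
Proof.
move=> h; rewrite /summ (_ : (fun y => `|f y|) = f) //.
by apply/funext => z; rewrite ger0_norm.
Qed.

Lemma ssum_swap (I J : choiceType) (a : I -> J -> R) :
  (forall i j, 0 <= a i j) -> (forall i, summ (a i)) -> summ (fun i => ssum (a i)) ->
  [/\ (forall j, summ (fun i => a i j)), summ (fun j => ssum (fun i => a i j)) &
   ssum (fun i => ssum (a i)) = ssum (fun j => ssum (fun i => a i j))].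
Proof.
move=> h si st.
have fi i : (Es (a i) < +oo)%E by apply: summ_Es.
have hs i : 0 <= ssum (a i) by apply: ssum_ge0.
have ft : (Es (fun i => ssum (a i)) < +oo)%E by apply: summ_Es.
have e1 : Es (fun i => ssum (a i)) = (\esum_(i in [set: I]) \esum_(j in [set: J]) (a i j)%:E)%E.
  by apply: eq_esum => i _; rewrite ssum_nn // -Es_fin.
have fj j : (Es (fun i => a i j) < +oo)%E.
  apply: le_lt_trans ft; rewrite e1 esum_swap; last by move=> i k; rewrite lee_fin.
  by apply: (ereal_point (b := fun j => \esum_(i in [set: I]) (a i j)%:E)) => k; apply: esum_ge0 => i _; rewrite lee_fin.
have hsj j : 0 <= ssum (fun i => a i j) by apply: ssum_ge0.
have e2 : Es (fun j => ssum (fun i => a i j)) = (\esum_(j in [set: J]) \esum_(i in [set: I]) (a i j)%:E)%E.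
  by apply: eq_esum => j _; rewrite ssum_nn // -Es_fin.
have e3 : Es (fun i => ssum (a i)) = Es (fun j => ssum (fun i => a i j)).
  by rewrite e1 e2 esum_swap // => i j; rewrite lee_fin.
split.
- by move=> j; apply: summ_nn => // i.
- by apply: summ_nn => //; rewrite -e3.
- by rewrite (ssum_nn hs) (ssum_nn hsj) e3.
Qed.

End Swap.

Section Geo.
Variable R : realType.

Lemma geo_summ (b : R) : 0 <= b -> b < 1 -> summ (fun t : nat => b ^+ t).
Proof.
move=> b0 b1; apply: summ_nn => [t|]; first exact: exprn_ge0.
have h : forall n, (\sum_(0 <= i < n) b ^+ i) * (1 - b) = 1 - b ^+ n.
  elim=> [|n IH]; first by rewrite big_nil mul0r expr0 subrr.
  rewrite big_nat_recr //= mulrDl IH exprS; ring.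
have hb : 0 < 1 - b by lra.
rewrite /Es -nneseries_esumT; last by move=> n; rewrite lee_fin exprn_ge0.
apply: (@le_lt_trans _ _ ((1 - b)^-1)%:E); last exact: ltry.
apply: lime_le; first by apply: is_cvg_nneseries => n _ _; rewrite lee_fin exprn_ge0.
apply: nearW => n; rewrite sumEFin lee_fin.
rewrite -[X in X <= _](mulfK (lt0r_neq0 hb)) h -[X in _ <= X]mul1r ler_pM2r ?invr_gt0 //.
have := exprn_ge0 n b0; lra.
Qed.

Lemma ssum_shift (f : nat -> R) : (forall t, 0 <= f t) -> summ f ->
  ssum f = f 0%N + ssum (fun t => f t.+1).
Proof.
move=> h sf.
have fin := summ_Es h sf.
have e : Es f = ((f 0%N)%:E + Es (fun t => f t.+1))%E.
  rewrite /Es -!nneseries_esumT; try by move=> n; rewrite lee_fin.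
  rewrite nneseries_recl //; last by move=> n; rewrite lee_fin.
  congr (_ + _)%E.
  rewrite -(nneseries_addn (f := fun k => (f k)%:E) 1); last by move=> n; rewrite lee_fin.
  by apply: congr_lim; apply/funext => n; apply: eq_bigr => i _; rewrite addn1.
have fin2 : (Es (fun t => f t.+1) < +oo)%E.
  apply: le_lt_trans fin; rewrite e leeDr //; by rewrite lee_fin.
rewrite !ssum_nn // e fineD //= ?ge0_fin_numE ?Es_ge0 //.
Qed.

End Geo.

Section MC.
Variable R : realType.
Variable X : countType.
Variable P : bool -> X -> X -> R.
Hypothesis P0 : forall a x y, 0 <= P a x y.
Hypothesis Ps : forall a x, summ (P a x).
Hypothesis P1 : forall a x, ssum (P a x) = 1.
Variable g : X -> bool.

Local Notation d := (dist P g).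

Lemma P_le1 a x y : P a x y <= 1.
Proof. by rewrite -(P1 a x); apply: ssum_point. Qed.

Lemma dist_ge0 t x y : 0 <= d t x y.
Proof.
elim: t x y => [|t IH] x y /=; first by case: eqP.
by apply: ssum_ge0 => z; rewrite mulr_ge0.
Qed.

Lemma summ_Pmul a x (h : X -> R) (k : R) : 0 <= k -> (forall z, `|h z| <= k) ->
  summ (fun z => P a x z * h z).
Proof.
move=> k0 hk; apply: (summ_le (g := P a x) (k := k)) => // z.
by rewrite normrM mulrC ler_wpM2r.
Qed.

Lemma summ_mulP (h : X -> R) a (x : X) (k : R) : 0 <= k -> (forall z, `|h z| <= k) ->
  summ (fun z => h z * P a z x) -> summ (fun z => h z * P a z x).
Proof. by []. Qed.

Lemma dist_sum t x : summ (d t x) /\ ssum (d t x) = 1.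
Proof.
elim: t x => [|t IH] x.
  split; first by apply: summ_eq (summ_ind x 1).
  by rewrite (ssum_eq (g := fun y => if y == x then 1 else 0)) // ssum_ind.
have hs z : summ (fun y => d t x z * P (g z) z y) by apply: summZ.
have he z : ssum (fun y => d t x z * P (g z) z y) = d t x z.
  by rewrite ssumZ // P1 mulr1.
have [_ s2 e] := ssum_swap (a := fun z y => d t x z * P (g z) z y)
  (fun z y => mulr_ge0 (dist_ge0 t x z) (P0 _ _ _)) hs
  (summ_eq (fun z => esym (he z)) (proj1 (IH x))).
split; first exact: s2.
by rewrite /= -e (ssum_eq he) (proj2 (IH x)).
Qed.

Lemma dist_le1 t x y : d t x y <= 1.
Proof.
by rewrite -(proj2 (dist_sum t x)); apply: ssum_point => //; [exact: dist_ge0 | case: (dist_sum t x)].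
Qed.

Lemma normd t x y : `|d t x y| <= 1.
Proof. by rewrite ger0_norm ?dist_ge0 ?dist_le1. Qed.

Lemma normP a x y : `|P a x y| <= 1.
Proof. by rewrite ger0_norm ?P0 ?P_le1. Qed.

Lemma norm_mul1 (u v : R) : `|u| <= 1 -> `|v| <= 1 -> `|u * v| <= 1.
Proof. by move=> hu hv; rewrite normrM mulr_ile1. Qed.

Lemma summ_dP t x y : summ (fun w => d t x w * P (g w) w y).
Proof.
apply: (summ_le (g := d t x) (k := 1)) => //; last by case: (dist_sum t x).
by move=> w; rewrite mul1r normrM ler_piMr ?normP.
Qed.

Lemma CK t x y : d t.+1 x y = ssum (fun z => P (g x) x z * d t z y).
Proof.
elim: t y => [|t IH] y.
  rewrite /= (ssum_eq (g := fun w => if w == x then P (g x) x y else 0)); last first.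
    by move=> w; case: eqP => [->|]; rewrite ?mul1r ?mul0r.
  rewrite ssum_ind // (ssum_eq (g := fun z => if z == y then P (g x) x y else 0)).
    by rewrite ssum_ind.
  by move=> z; case: eqP => [->|/nesym/eqP/negbTE ->]; rewrite ?eqxx ?mulr1 ?mulr0.
have e1 w : d t.+1 x w * P (g w) w y
    = ssum (fun z => P (g x) x z * d t z w * P (g w) w y).
  have sm : summ (fun z => P (g x) x z * d t z w).
    by apply: (summ_Pmul _ _ (k := 1)) => // z; exact: normd.
  rewrite IH [LHS]mulrC -ssumZ //.
  by apply: ssum_eq => z; rewrite mulrC.
transitivity (ssum (fun w => d t.+1 x w * P (g w) w y)); first by [].
rewrite (ssum_eq e1).
have [_ _ ->] := ssum_swap (a := fun w z => P (g x) x z * d t z w * P (g w) w y)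
  (fun w z => mulr_ge0 (mulr_ge0 (P0 _ _ _) (dist_ge0 _ _ _)) (P0 _ _ _))
  (fun w => summ_eq (fun z => mulrA (P (g x) x z) (d t z w) (P (g w) w y))
     (summ_Pmul _ _ (h := fun z => d t z w * P (g w) w y) (k := 1) ler01
        (fun z => norm_mul1 (normd _ _ _) (normP _ _ _))))
  (summ_eq e1 (summ_dP t.+1 x y)).
apply: ssum_eq => z.
rewrite (ssum_eq (g := fun w => P (g x) x z * (d t z w * P (g w) w y))); last by move=> w; rewrite mulrA.
by rewrite ssumZ //; exact: summ_dP.
Qed.

Definition ga t x := ssum (fun y => d t x y * (g y)%:R).

Lemma normg y : `|(g y)%:R : R| <= 1.
Proof. by case: (g y); rewrite ?normr1 ?normr0. Qed.

Lemma summ_dg t x : summ (fun y => d t x y * (g y)%:R).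
Proof.
apply: (summ_le (g := d t x) (k := 1)) => //; last by case: (dist_sum t x).
by move=> w; rewrite mul1r normrM ler_piMr ?normg.
Qed.

Lemma ga_ge0 t x : 0 <= ga t x.
Proof. by apply: ssum_ge0 => y; rewrite mulr_ge0 ?dist_ge0. Qed.

Lemma ga_le1 t x : ga t x <= 1.
Proof.
rewrite -(proj2 (dist_sum t x)); apply: ssum_le; first exact: summ_dg.
  by case: (dist_sum t x).
by move=> y; rewrite ler_piMr ?dist_ge0 //; case: (g y).
Qed.

Lemma norm_ga t x : `|ga t x| <= 1.
Proof. by rewrite ger0_norm ?ga_ge0 ?ga_le1. Qed.

Lemma ga0 x : ga 0 x = (g x)%:R.
Proof.
rewrite /ga (ssum_eq (g := fun y => if y == x then (g x)%:R else 0)) ?ssum_ind //.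
by move=> y /=; case: eqP => [->|]; rewrite ?mul1r ?mul0r.
Qed.

Lemma ga_rec t x : ga t.+1 x = ssum (fun z => P (g x) x z * ga t z).
Proof.
have e1 y : d t.+1 x y * (g y)%:R = ssum (fun z => P (g x) x z * d t z y * (g y)%:R).
  have sm : summ (fun z => P (g x) x z * d t z y).
    by apply: (summ_Pmul _ _ (k := 1)) => // z; exact: normd.
  by rewrite CK [LHS]mulrC -ssumZ //; apply: ssum_eq => z; rewrite mulrC.
rewrite /ga (ssum_eq e1).
have [_ _ ->] := ssum_swap (a := fun y z => P (g x) x z * d t z y * (g y)%:R)
  (fun y z => mulr_ge0 (mulr_ge0 (P0 _ _ _) (dist_ge0 _ _ _)) (ler0n _ _))
  (fun y => summ_eq (fun z => mulrA (P (g x) x z) (d t z y) (g y)%:R)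
     (summ_Pmul _ _ (h := fun z => d t z y * (g y)%:R) (k := 1) ler01
        (fun z => norm_mul1 (normd _ _ _) (normg _))))
  (summ_eq e1 (summ_dg t.+1 x)).
apply: ssum_eq => z.
rewrite (ssum_eq (g := fun y => P (g x) x z * (d t z y * (g y)%:R))); last by move=> w; rewrite mulrA.
by rewrite ssumZ //; exact: summ_dg.
Qed.

Variable beta : R.
Hypothesis b0 : 0 <= beta.
Hypothesis b1 : beta < 1.

Definition Ag x := ssum (fun t => beta ^+ t * ga t x).
Definition G := ssum (fun t : nat => beta ^+ t).

Lemma summ_bt (h : nat -> R) : (forall t, `|h t| <= 1) -> summ (fun t => beta ^+ t * h t).
Proof.
move=> hh; apply: (summ_le (g := fun t => beta ^+ t) (k := 1)) => //; last exact: geo_summ.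
by move=> t; rewrite mul1r normrM ler_piMr.
Qed.

Lemma norm_bt t : `|beta ^+ t| <= 1.
Proof. by rewrite ger0_norm ?exprn_ge0 ?exprn_ile1 // ltW. Qed.

Lemma norm_bga t z : `|beta ^+ t * ga t z| <= 1.
Proof. exact: norm_mul1 (norm_bt t) (norm_ga t z). Qed.

Lemma Ag_ge0 x : 0 <= Ag x.
Proof. by apply: ssum_ge0 => t; rewrite mulr_ge0 ?exprn_ge0 ?ga_ge0. Qed.

Lemma Ag_le x : Ag x <= G.
Proof.
apply: ssum_le; [exact: summ_bt (fun t => norm_ga t x) | exact: geo_summ |].
by move=> t; rewrite ler_piMr ?exprn_ge0 ?ga_le1.
Qed.

Lemma norm_Ag x : `|Ag x| <= G.
Proof. by rewrite ger0_norm ?Ag_ge0 ?Ag_le. Qed.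

Lemma G_ge0 : 0 <= G.
Proof. by apply: ssum_ge0 => t; rewrite exprn_ge0. Qed.

Lemma Ag_eq x : Ag x = (g x)%:R + beta * ssum (fun z => P (g x) x z * Ag z).
Proof.
rewrite /Ag ssum_shift; last exact: summ_bt (fun t => norm_ga t x).
  2: by move=> t; rewrite mulr_ge0 ?exprn_ge0 ?ga_ge0.
rewrite expr0 mul1r ga0; congr (_ + _).
have e1 t : beta ^+ t.+1 * ga t.+1 x
    = beta * ssum (fun z => P (g x) x z * (beta ^+ t * ga t z)).
  rewrite ga_rec exprS -mulrA; congr (beta * _).
  rewrite -ssumZ; last by apply: (summ_Pmul _ _ (k := 1)) => // z; exact: norm_ga.
  by apply: ssum_eq => z; rewrite mulrCA.
have hle t : `|ssum (fun z => P (g x) x z * (beta ^+ t * ga t z))| <= 1 * `|beta ^+ t|.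
  have s1 : summ (fun z => P (g x) x z * (beta ^+ t * ga t z)).
    by apply: (summ_Pmul _ _ (k := 1)) => // z; exact: norm_bga.
  rewrite ger0_norm; last by apply: ssum_ge0 => z; rewrite !mulr_ge0 ?exprn_ge0 ?ga_ge0.
  rewrite mul1r ger0_norm ?exprn_ge0 //.
  apply: (le_trans (y := ssum (fun z => beta ^+ t * P (g x) x z))).
    apply: ssum_le => //; first exact: summZ.
    by move=> z; rewrite mulrC ler_wpM2r ?ler_piMr ?exprn_ge0 ?ga_le1.
  by rewrite ssumZ // P1 mulr1.
have so : summ (fun t => ssum (fun z => P (g x) x z * (beta ^+ t * ga t z))).
  apply: (summ_le (g := fun t => beta ^+ t) (k := 1)) => //; exact: geo_summ.
rewrite (ssum_eq e1) ssumZ //; congr (beta * _).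
have [_ _ ->] := ssum_swap (a := fun t z => P (g x) x z * (beta ^+ t * ga t z))
  (fun t z => mulr_ge0 (P0 _ _ _) (mulr_ge0 (exprn_ge0 _ b0) (ga_ge0 _ _)))
  (fun t => summ_Pmul _ _ (h := fun z => beta ^+ t * ga t z) (k := 1) ler01
        (fun z => norm_bga _ _))
  so.
apply: ssum_eq => z.
by rewrite ssumZ //; exact: summ_bt (fun t => norm_ga t z).
Qed.

Lemma N_Ag x : Nfreq P beta g x = (1 - beta) * Ag x.
Proof. by []. Qed.

Lemma N_eq x : Nfreq P beta g x =
  (1 - beta) * (g x)%:R + beta * ssum (fun z => P (g x) x z * Nfreq P beta g z).
Proof.
rewrite {1}N_Ag Ag_eq (ssum_eq (f := fun z => P (g x) x z * Nfreq P beta g z)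
  (g := fun z => (1 - beta) * (P (g x) x z * Ag z))); last by move=> z; rewrite N_Ag mulrCA.
rewrite ssumZ; first by ring.
by apply: (summ_Pmul _ _ (k := G)) => //; [exact: G_ge0 | exact: norm_Ag].
Qed.

Lemma norm_N x : `|Nfreq P beta g x| <= (1 - beta) * G.
Proof.
have h : 0 <= 1 - beta by rewrite subr_ge0 ltW.
by rewrite N_Ag normrM (ger0_norm h) ler_wpM2l // norm_Ag.
Qed.

Lemma N_ge0 x : 0 <= Nfreq P beta g x.
Proof. have h : 0 <= 1 - beta by rewrite subr_ge0 ltW. by rewrite N_Ag mulr_ge0 ?Ag_ge0. Qed.

End MC.

Section Main.
Variable R : realType.
Variable X : countType.
Variables (P : bool -> X -> X -> R) (c : X -> bool -> R) (beta : R) (V : R -> X -> R).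
Hypothesis hb0 : 0 < beta.
Hypothesis hb1 : beta < 1.
Hypothesis P0 : forall a x y, 0 <= P a x y.
Hypothesis Ps : forall a x, summ (P a x).
Hypothesis P1 : forall a x, ssum (P a x) = 1.

Definition bnd (u : X -> R) := exists K, 0 <= K /\ forall z, `|u z| <= K.

Hypothesis Vb : forall lam, bnd (V lam).
Hypothesis Vfp : forall lam x,
  V lam x = Num.min (Hq P c beta lam (V lam) x false) (Hq P c beta lam (V lam) x true).

Local Notation H lam x a := (Hq P c beta lam (V lam) x a).
Definition gp lam x := ~~ (H lam x false < H lam x true).

Lemma minE' (u v : R) : Num.min u v = if u < v then u else v.
Proof. by []. Qed.

Lemma V_gp lam x : V lam x = H lam x (gp lam x).
Proof. by rewrite Vfp minE' /gp; case: ltP. Qed.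

Lemma V_le lam x a : V lam x <= H lam x a.
Proof. rewrite Vfp minE'; case: a; case: ltP => h //; exact: ltW. Qed.

Lemma summPb a x (u : X -> R) : bnd u -> summ (fun z => P a x z * u z).
Proof. by case=> K [K0 hK]; apply: (summ_Pmul Ps _ _ (k := K)). Qed.

Lemma bndB (u v : X -> R) k : bnd u -> bnd v -> bnd (fun z => u z - k * v z).
Proof.
case=> K [K0 hK] [L [L0 hL]]; exists (K + `|k| * L); split.
  by rewrite addr_ge0 // mulr_ge0.
move=> z; apply: (le_trans (ler_normB _ _)); apply: lerD; first exact: hK.
by rewrite normrM; apply: ler_wpM2l; [exact: normr_ge0 | exact: hL].
Qed.

Lemma ssumPB a x (u v : X -> R) k : bnd u -> bnd v ->
  ssum (fun z => P a x z * (u z - k * v z))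
  = ssum (fun z => P a x z * u z) - k * ssum (fun z => P a x z * v z).
Proof.
move=> bu bv.
rewrite (ssum_eq (g := fun z => P a x z * u z + (- k) * (P a x z * v z))); last first.
  by move=> z; rewrite mulrBr mulrCA mulNr.
have s1 := summPb a x bu; have s2 := summPb a x bv.
rewrite (ssumD s1 (summZ (- k) s2)) (ssumZ (- k) s2).
by rewrite mulNr.
Qed.

Lemma Hdiff l1 l2 x a : H l2 x a =
  H l1 x a + (1 - beta) * (l2 - l1) * a%:R + beta * ssum (fun z => P a x z * (V l2 z - V l1 z)).
Proof.
rewrite (ssum_eq (g := fun z => P a x z * (V l2 z - 1 * V l1 z))); last by move=> z; rewrite mul1r.
rewrite (ssumPB a x 1 (Vb l2) (Vb l1)) /Hq mul1r; ring.
Qed.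

Lemma contract (h : X -> bool) (W : X -> R) : bnd W ->
  (forall x, W x <= beta * ssum (fun z => P (h x) x z * W z)) -> forall x, W x <= 0.
Proof.
move=> [K [K0 hK]] hW x.
have ub : forall z, W z <= sup (range W).
  move=> z; apply: ub_le_sup; last by exists z.
  by exists K => _ [y _ <-]; apply: le_trans (ler_norm _) (hK y).
have hS : sup (range W) <= beta * sup (range W).
  apply: ge_sup; first by exists (W x), x.
  move=> _ [z _ <-]; apply: le_trans (hW z) _; rewrite ler_pM2l //.
  have sl : ssum (fun y => P (h z) z y * W y) <= ssum (fun y => sup (range W) * P (h z) z y).
    apply: ssum_le.
    - by apply: summPb; exists K; split.
    - exact: (summZ _ (Ps _ _)).
    - by move=> y; rewrite mulrC ler_wpM2r.
  apply: le_trans sl _.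
  by rewrite (ssumZ _ (Ps _ _)) P1 mulr1.
have : sup (range W) <= 0.
  have e : sup (range W) * (1 - beta) <= 0 by rewrite mulrBr mulr1 subr_le0 mulrC.
  by move: e; rewrite pmulr_lle0 // subr_gt0.
by apply: le_trans (ub x).
Qed.

Local Notation N h := (Nfreq P beta h).

Lemma bnd1 (u v : X -> R) : bnd u -> bnd v -> bnd (fun z => u z - v z).
Proof.
move=> bu bv; have [K [K0 hK]] := bndB 1 bu bv.
by exists K; split => // z; have := hK z; rewrite mul1r.
Qed.

Lemma bndN h : bnd (N h).
Proof.
exists ((1 - beta) * G beta); split; last exact: (norm_N P0 Ps P1 h (ltW hb0) hb1).
apply: mulr_ge0; first by rewrite subr_ge0 ltW.
by apply: ssum_ge0 => t; rewrite exprn_ge0 // ltW.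
Qed.

Lemma Neq h x : N h x = (1 - beta) * (h x)%:R + beta * ssum (fun z => P (h x) x z * N h z).
Proof. exact: (N_eq P0 Ps P1 h (ltW hb0) hb1). Qed.

Lemma ssumPD a x l1 l2 k h :
  ssum (fun z => P a x z * ((V l2 z - V l1 z) - k * N h z)) =
  ssum (fun z => P a x z * V l2 z) - ssum (fun z => P a x z * V l1 z)
  - k * ssum (fun z => P a x z * N h z).
Proof.
rewrite (ssumPB a x k (bnd1 (Vb l2) (Vb l1)) (bndN h)).
rewrite (ssum_eq (g := fun z => P a x z * (V l2 z - 1 * V l1 z))); last by move=> z; rewrite mul1r.
by rewrite (ssumPB a x 1 (Vb l2) (Vb l1)) mul1r.
Qed.

Lemma UB l1 l2 x : V l2 x - V l1 x <= (l2 - l1) * N (gp l1) x.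
Proof.
rewrite -subr_le0.
apply: (contract (h := gp l1) (W := fun z => (V l2 z - V l1 z) - (l2 - l1) * N (gp l1) z)).
  exact: bndB (bnd1 (Vb _) (Vb _)) (bndN _).
move=> y; rewrite ssumPD.
have f1 := V_le l2 y (gp l1 y).
have f2 := V_gp l1 y.
have f3 := Neq (gp l1) y.
move: f1 f2 f3; rewrite /Hq.
set A2 := ssum _. set A1 := ssum _. set AN := ssum _.
set gg := ((gp l1 y)%:R : R).
move=> f1 f2 f3. rewrite f3.
have hb := hb0.
move: f1; rewrite f2 => f1.
lra.
Qed.

Lemma LB l1 l2 x : (l2 - l1) * N (gp l2) x <= V l2 x - V l1 x.
Proof.
suff : (V l1 x - V l2 x) - (l1 - l2) * N (gp l2) x <= 0 by lra.
apply: (contract (h := gp l2) (W := fun z => (V l1 z - V l2 z) - (l1 - l2) * N (gp l2) z)).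
  exact: bndB (bnd1 (Vb _) (Vb _)) (bndN _).
move=> y; rewrite ssumPD.
have f1 := V_le l1 y (gp l2 y).
have f2 := V_gp l2 y.
have f3 := Neq (gp l2) y.
move: f1 f2 f3; rewrite /Hq.
set A2 := ssum _. set A1 := ssum _. set AN := ssum _.
set gg := ((gp l2 y)%:R : R).
move=> f1 f2 f3. rewrite f3.
move: f1; rewrite f2 => f1.
lra.
Qed.

Lemma inH_gp l1 l2 : l1 < l2 -> inH P beta (gp l1) (gp l2).
Proof.
move=> hl x; have h1 := UB l1 l2 x; have h2 := LB l1 l2 x.
have hd : 0 < l2 - l1 by rewrite subr_gt0.
rewrite -(ler_pM2l hd); exact: le_trans h2 h1.
Qed.

Lemma summ_F (p q u v : X -> R) a x b z : bnd u -> bnd v ->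
  (forall y, 0 <= p y /\ p y <= P a x y + P b z y) ->
  (forall y, 0 <= q y /\ q y <= P a x y + P b z y) ->
  summ (fun y => p y * u y - q y * v y).
Proof.
move=> [K [K0 hK]] [L [L0 hL]] hp hq.
apply: (summ_le (g := fun y => P a x y + P b z y) (k := K + L)).
- by rewrite addr_ge0.
- move=> y; rewrite (ger0_norm (x := P a x y + P b z y)); last by rewrite addr_ge0.
  have [p0 p1] := hp y; have [q0 q1] := hq y.
  have e1 : `|p y * u y| <= (P a x y + P b z y) * K.
    by rewrite normrM ger0_norm //; apply: ler_pM.
  have e2 : `|q y * v y| <= (P a x y + P b z y) * L.
    by rewrite normrM ger0_norm //; apply: ler_pM.
  apply: le_trans (ler_normB _ _) _.
  by rewrite mulrDl [K * _]mulrC [L * _]mulrC; apply: lerD.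
- exact: summD.
Qed.

Lemma pos_bnd (w : R) (s : R) : `|w| <= s -> 0 <= pos_part w /\ pos_part w <= s.
Proof. by move=> h; split; [exact: pos_part_ge0 | exact: le_trans (pos_part_abs w) h]. Qed.

Lemma normPB a x b z y (k : R) : 0 <= k <= 1 ->
  `|k * P a x y - P b z y| <= P b z y + P a x y.
Proof.
move=> /andP[k0 k1]; apply: le_trans (ler_normB _ _) _.
rewrite normrM (ger0_norm k0) !ger0_norm ?P0 // addrC lerD2l.
by rewrite ler_piMl ?P0.
Qed.

Lemma normPB1 a b x y : `|P a x y - P b x y| <= P a x y + P b x y.
Proof.
apply: le_trans (ler_normB _ _) _.
by rewrite !ger0_norm ?P0.
Qed.

Lemma caseb l1 l2 x : l1 < l2 -> cond_b P beta ->
  passive P c beta l1 (V l1) x -> passive P c beta l2 (V l2) x.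
Proof.
move=> hl hcb; rewrite /passive.
have hd : 0 < l2 - l1 by rewrite subr_gt0.
set p := fun y => pos_part (P false x y - P true x y).
set q := fun y => pos_part (P true x y - P false x y).
set F := fun y => p y * N (gp l1) y - q y * N (gp l2) y.
have hc : ssum F <= (1 - beta) / beta := hcb _ _ (inH_gp hl) x.
have sF : summ F.
  apply: (summ_F (a := true) (x := x) (b := false) (z := x) (bndN _) (bndN _)) => y.
    by rewrite /p; apply: pos_bnd; rewrite [X in _ <= X]addrC; exact: normPB1.
  by rewrite /q; apply: pos_bnd; exact: normPB1.
set D := fun y => V l2 y - V l1 y.
have bD : bnd D by exact: bnd1.
have key : ssum (fun y => P false x y * D y) - ssum (fun y => P true x y * D y) <= (l2 - l1) * ssum F.
  have s0 := summPb false x bD; have s1 := summPb true x bD.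
  rewrite -(ssumZ _ sF) -mulN1r -(ssumZ _ s1) -(ssumD s0 (summZ _ s1)).
  apply: ssum_le; [exact: summD s0 (summZ _ s1) | exact: summZ |].
  move=> y; rewrite /F /D /p /q.
  have u := pos_partB (P false x y - P true x y); rewrite opprB in u.
  have ub := UB l1 l2 y; have lb := LB l1 l2 y.
  have h1 := ler_wpM2l (pos_part_ge0 (P false x y - P true x y)) ub.
  have h2 := ler_wpM2l (pos_part_ge0 (P true x y - P false x y)) lb.
  move: h1 h2.
  set a1 := pos_part _. set a2 := pos_part _.
  have -> : P false x y = P true x y + (a1 - a2) by rewrite u; ring.
  move=> h1 h2.
  set n1 := N _ y in h1 *. set n2 := N _ y in h2 *.
  set dd := V l2 y - V l1 y in h1 h2 *.
  nra.
have hcm : (l2 - l1) * ssum F <= (l2 - l1) * ((1 - beta) / beta) := ler_wpM2l (ltW hd) hc.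
have kb := ler_wpM2l (ltW hb0) (le_trans key hcm).
have eq : beta * ((l2 - l1) * ((1 - beta) / beta)) = (l2 - l1) * (1 - beta).
  by field; rewrite lt0r_neq0.
rewrite eq in kb.
have eD a : ssum (fun y => P a x y * D y) =
    ssum (fun y => P a x y * V l2 y) - ssum (fun y => P a x y * V l1 y).
  rewrite -[RHS]subr0 -[X in _ - _ - X](mul0r (ssum (fun y => P a x y * N (gp l1) y))).
  by rewrite -ssumPD; apply: ssum_eq => y; rewrite mul0r subr0.
rewrite !eD in kb.
rewrite /Hq /= => hp1.
lra.
Qed.

Lemma Nge0 h x : 0 <= N h x.
Proof. by apply: N_ge0; [exact: P0 | exact: ltW hb0 | exact: hb1]. Qed.

Lemma ssumPV a z l1 l2 : ssum (fun y => P a z y * (V l2 y - V l1 y)) =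
    ssum (fun y => P a z y * V l2 y) - ssum (fun y => P a z y * V l1 y).
Proof.
rewrite -[RHS]subr0 -[X in _ - _ - X](mul0r (ssum (fun y => P a z y * N (gp l1) y))).
by rewrite -ssumPD; apply: ssum_eq => y; rewrite mul0r subr0.
Qed.

Lemma ssumP_le a z (u : X -> R) M : bnd u -> (forall y, u y <= M) ->
  ssum (fun y => P a z y * u y) <= M.
Proof.
move=> bu hM.
have sl : ssum (fun y => P a z y * u y) <= ssum (fun y => M * P a z y).
  apply: ssum_le.
  - exact: summPb.
  - exact: (summZ _ (Ps _ _)).
  - by move=> y; rewrite mulrC ler_wpM2r.
apply: le_trans sl _.
by rewrite (ssumZ _ (Ps _ _)) P1 mulr1.
Qed.

Lemma UBstep l1 l2 z : V l2 z - V l1 z <=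
  (1 - beta) * (l2 - l1) * (gp l1 z)%:R + beta * ssum (fun y => P (gp l1 z) z y * (V l2 y - V l1 y)).
Proof.
rewrite ssumPV.
have f1 := V_le l2 z (gp l1 z).
have f2 := V_gp l1 z.
move: f1 f2; rewrite /Hq.
set A2 := ssum _. set A1 := ssum _.
set gg := ((gp l1 z)%:R : R).
move=> f1 f2; rewrite f2; lra.
Qed.

Lemma casea l1 l2 x : l1 < l2 -> cond_a P beta ->
  passive P c beta l1 (V l1) x -> passive P c beta l2 (V l2) x.
Proof.
move=> hl hca hp.
have hd : 0 < l2 - l1 by rewrite subr_gt0.
have hx : gp l1 x = false by rewrite /gp hp.
set D := fun y => V l2 y - V l1 y.
have bD : bnd D by exact: bnd1.
set K := ssum (fun y => P true x y * D y).
have K0 : 0 <= K.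
  apply: ssum_ge0 => y; apply: mulr_ge0 => //; apply: le_trans (LB l1 l2 y).
  by apply: mulr_ge0; [exact: ltW | exact: Nge0].
set S := sup (range D).
have ubD : forall z, D z <= S.
  move=> z; apply: ub_le_sup; last by exists z.
  case: bD => M [M0 hM]; exists M => _ [y _ <-]; exact: le_trans (ler_norm _) (hM y).
set B := (1 - beta) * (l2 - l1) + K + (l2 - l1) * ((1 - beta) ^+ 2 / beta).
have hz : forall z, D z <= beta * S \/ D z <= B.
  move=> z; have u := UBstep l1 l2 z; rewrite -/D in u.
  case e : (gp l1 z) u => u.
    right.
    set p := fun y => pos_part (beta * P true z y - P true x y).
    set q := fun y => pos_part (P true x y - beta * P true z y).
    set F := fun y => p y * N (gp l1) y - q y * N (gp l2) y.
    have hc : ssum F <= (1 - beta) ^+ 2 / beta := hca _ _ (inH_gp hl) x z.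
    have hb : 0 <= beta <= 1 by rewrite (ltW hb0) (ltW hb1).
    have sF : summ F.
      apply: (summ_F (a := true) (x := z) (b := true) (z := x) (bndN _) (bndN _)) => y.
        rewrite /p; apply: pos_bnd; rewrite [X in _ <= X]addrC; exact: normPB hb.
      rewrite /q; apply: pos_bnd; rewrite distrC [X in _ <= X]addrC; exact: normPB hb.
    have key : beta * ssum (fun y => P true z y * D y) - K <= (l2 - l1) * ssum F.
      have s0 := summPb true z bD; have s1 := summPb true x bD.
      rewrite -(ssumZ _ sF) -(ssumZ _ s0) -mulN1r -(ssumZ _ s1) -(ssumD (summZ _ s0) (summZ _ s1)).
      apply: ssum_le; [exact: summD (summZ _ s0) (summZ _ s1) | exact: summZ |].
      move=> y; rewrite /F /D /p /q.
      rewrite /=.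
      have u1 := pos_partB (beta * P true z y - P true x y); rewrite opprB in u1.
      have ub := UB l1 l2 y; have lb := LB l1 l2 y.
      have h1 := ler_wpM2l (pos_part_ge0 (beta * P true z y - P true x y)) ub.
      have h2 := ler_wpM2l (pos_part_ge0 (P true x y - beta * P true z y)) lb.
      have ee : beta * (P true z y * (V l2 y - V l1 y)) + -1 * (P true x y * (V l2 y - V l1 y))
        = pos_part (beta * P true z y - P true x y) * (V l2 y - V l1 y)
          - pos_part (P true x y - beta * P true z y) * (V l2 y - V l1 y).
        by rewrite -mulrBl u1; ring.
      rewrite ee; move: h1 h2.
      set a1 := pos_part _. set a2 := pos_part _.
      set n1 := N _ y. set n2 := N _ y.
      set dd := V l2 y - V l1 y.
      move=> h1 h2; lra.
    have hcm : (l2 - l1) * ssum F <= (l2 - l1) * ((1 - beta) ^+ 2 / beta) := ler_wpM2l (ltW hd) hc.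
    rewrite /B; move: u key; rewrite /D /= mulr1 => u key.
    lra.
  left; apply: le_trans u _.
  rewrite /= mulr0 add0r ler_pM2l //.
  exact: ssumP_le.
have hDx : D x <= (1 - beta) * (l2 - l1) + beta * K.
  have dx : D x <= beta * S.
    have u := UBstep l1 l2 x; rewrite -/D hx /= mulr0 add0r in u.
    apply: le_trans u _; rewrite ler_pM2l //; exact: ssumP_le.
  have [hbs|hbs] := leP (beta * S) B.
    have hS : S <= B.
      apply: ge_sup; first by exists (D x), x.
      move=> _ [z _ <-]; case: (hz z) => // h; exact: le_trans h hbs.
    have := ler_wpM2l (ltW hb0) hS.
    have eq : beta * B = (1 - beta) * (l2 - l1) + beta * K.
      by rewrite /B; field; rewrite lt0r_neq0.
    rewrite eq; lra.
  have hS : S <= beta * S.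
    apply: ge_sup; first by exists (D x), x.
    move=> _ [z _ <-]; case: (hz z) => // h; apply: le_trans h (ltW hbs).
  have : S <= 0.
    have e : S * (1 - beta) <= 0 by rewrite mulrBr mulr1 subr_le0 mulrC.
    by move: e; rewrite pmulr_lle0 // subr_gt0.
  move=> S0; have : beta * S <= 0 by rewrite pmulr_rle0.
  have : 0 <= (1 - beta) * (l2 - l1) by rewrite mulr_ge0 // ?subr_ge0 ltW.
  have : 0 <= beta * K by rewrite mulr_ge0 // ltW.
  lra.
have v1 := V_gp l1 x; rewrite hx in v1.
have eK : ssum (fun y => P true x y * V l2 y) = ssum (fun y => P true x y * V l1 y) + K.
  by rewrite /K /D ssumPV; ring.
move: hp; rewrite /passive => hp.
have v2 := Vfp l2 x; rewrite minE' in v2.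
case: ltP v2 => // h v2.
move: hDx hp h v2 v1; rewrite /D /Hq /= eK.
lra.
Qed.

End Main.

Lemma summ_of_ssum1 (R : realType) (T : choiceType) (f : T -> R) :
  (forall y, 0 <= f y) -> ssum f = 1 -> summ f.
Proof.
move=> h s1; apply: summ_nn => //; move: s1; rewrite ssum_nn //.
case: (Es f) => [r _| |] /=.
- exact: ltry.
- by move=> /eqP; rewrite eq_sym oner_eq0.
- by move=> /eqP; rewrite eq_sym oner_eq0.
Qed.

Theorem theorem1 (R : realType) (X : countType)
    (P : bool -> X -> X -> R) (c : X -> bool -> R) (beta : R)
    (V : R -> X -> R) :
  0 < beta < 1 ->
  stochastic P ->
  (exists M : R, forall x a, `|c x a| <= M) ->
  (forall lam : R, bellman_fp P c beta lam (V lam)) ->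
  cond_a P beta \/ cond_b P beta ->
  indexable P c beta V.
Proof.
move=> /andP[hb0 hb1] hst _ hbell hcond.
have P0 : forall a x y, 0 <= P a x y by move=> a x y; case: (hst a x) => h _; exact: h.
have P1 : forall a x, ssum (P a x) = 1 by move=> a x; case: (hst a x).
have Ps : forall a x, summ (P a x) by move=> a x; apply: summ_of_ssum1 => //; exact: P0.
have Vb : forall lam, bnd (V lam).
  move=> lam; case: (hbell lam) => [[M hM] _]; exists `|M|; split => // x.
  exact: le_trans (hM x) (ler_norm M).
have Vfp : forall lam x, V lam x = Num.min (Hq P c beta lam (V lam) x false)
    (Hq P c beta lam (V lam) x true).
  by move=> lam x; case: (hbell lam) => _ h; exact: h.
move=> l1 l2 hl x hp.
have [e|hlt] := eqVneq l1 l2; first by rewrite -e.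
have hl' : l1 < l2 by rewrite lt_neqAle hlt hl.
case: hcond => hc.
  exact: (casea hb0 hb1 P0 Ps P1 Vb Vfp hl' hc hp).
exact: (caseb hb0 hb1 P0 Ps P1 Vb Vfp hl' hc hp).
Qed.
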